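(* Let $N\ge2$ and let $P$ be a symmetric probability density on $\Lambda^N$. Then there is a sequence $(P_n)$ of symmetric probability densities on $\Lambda^N$ such that each $P_n$ satisfies the condition: there is a measurable set $A\subset\Lambda$ of positive measure such that for every $x_N\in A$ there is a constant $\gamma(x_N)>0$ with $P_n(\cdot,x_N)\ge\gamma(x_N)\rho_n^{(N-1)}$ a.e. on $\Lambda^{N-1}$ (where $\rho_n^{(N-1)}$ is the $(N-1)$-marginal of $P_n$); and $P_n\to P$ in $L^1(\Lambda^N;d^Nx)$. If in addition the measure $dx$ is finite and $P$ is essentially bounded, then the sequence can be chosen so that moreover $P_n\to P$ in $L^\infty(\Lambda^N;d^Nx)$.
   Context: $(\Lambda;dx)$ is a complete $\sigma$-finite measure space with non-zero measure $dx$; $d^kx$ denotes the completion of $dx^{\otimes k}$ on $\Lambda^k$. A symmetric probability density on $\Lambda^N$ is a nonnegative, measurable, symmetric function $P$ with $\int_{\Lambda^N}P\,d^Nx=1$; its $(N-1)$-marginal is $\rho^{(N-1)}(x_1,\dots,x_{N-1}):=\int_\Lambda P(x_1,\dots,x_N)\,dx_N$. *)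

(* Defs.v *)
From HB Require Import structures.
From mathcomp Require Import all_boot all_order all_algebra all_fingroup.
From mathcomp Require Import all_classical all_reals all_analysis.
Set Implicit Arguments. Unset Strict Implicit. Unset Printing Implicit Defensive.
Import Order.TTheory GRing.Theory Num.Theory.
Import numFieldNormedType.Exports.
Local Open Scope classical_set_scope.
Local Open Scope ring_scope.

Section Pow.
Context {d : measure_display} {Lam : measurableType d} {R : realType}.
Variable mu : {sigma_finite_measure set Lam -> \bar R}.

(* mpow k = Lam^(k+1), built as nested pairs (((x_1, x_2), x_3), ..., x_(k+1)),
   with the product sigma-algebra. *)
Fixpoint mpow (k : nat) : {d' : measure_display & measurableType d'} :=
  match k with
  | 0 => existT _ d Lam
  | k'.+1 => existT _ _ ((projT2 (mpow k') * Lam)%type : measurableType _)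
  end.

Definition Lpow (k : nat) : Type := projT2 (mpow k).

Fixpoint mupow (k : nat) : {measure set (projT2 (mpow k)) -> \bar R} :=
  match k with
  | 0 => mu
  | k'.+1 => (mupow k' \x mu)%E
  end.

(* its completion d^(k+1)x, a measure on the Caratheodory-measurable sets *)
Definition Ltype (k : nat) := caratheodory_type ((mupow k)^*)%mu.
Definition cmupow (k : nat) : set (Ltype k) -> \bar R :=
  @completed_measure_extension _ _ _ (mupow k).

(* coordinates: coord k x i = x_(i+1); the last coordinate (ord_max) is x.2 *)
Fixpoint coord (k : nat) : Lpow k -> 'I_k.+1 -> Lam :=
  match k return Lpow k -> 'I_k.+1 -> Lam with
  | 0 => fun x _ => x
  | k'.+1 => fun x i =>
      match unlift ord_max i with
      | Some j => @coord k' x.1 j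
      | None => x.2
      end
  end.

Definition sym_prob_density (k : nat) (P : Lpow k -> R) : Prop :=
  [/\ forall x, 0 <= P x,
      measurable_fun [set: Ltype k] (P : Ltype k -> R),
      (forall (s : {perm 'I_k.+1}) (x y : Lpow k),
          (forall i, coord y i = coord x (s i)) -> P y = P x)
    & (\int[@cmupow k]_x (P x)%:E = 1)%E].

(* (N-1)-marginal of P on Lam^N, N = k+2 *)
Definition marginal (k : nat) (P : Lpow k.+1 -> R) (y : Lpow k) : \bar R :=
  (\int[mu]_t (P (y, t))%:E)%E.

Definition lower_bound_cond (k : nat) (P : Lpow k.+1 -> R) : Prop :=
  exists A : set Lam, [/\ measurable A, (0 < mu A)%E &
    forall xN, A xN -> exists gamma : R, 0 < gamma /\
      {ae @cmupow k, forall y : Ltype k,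
         (gamma%:E * marginal P y <= (P (y, xN))%:E)%E}].
End Pow.
Arguments Ltype {d Lam R} mu k.
Arguments mupow {d Lam R} mu k.
Arguments Lpow {d} Lam k.
Arguments cmupow {d Lam R} mu k _.

(* Main.v *)
Require Import Defs.
From HB Require Import structures.
From mathcomp Require Import all_boot all_order all_algebra all_fingroup.
From mathcomp Require Import all_classical all_reals all_analysis.
From mathcomp Require Import measurable_realfun ess_sup_inf lra ring.
Import Order.TTheory GRing.Theory Num.Theory.
Import numFieldNormedType.Exports.
Local Open Scope classical_set_scope.
Local Open Scope ring_scope.
Section DNsec.
Context {d : measure_display} {Lam : measurableType d}.

Definition DN (D : set Lam) (k : nat) : set (projT2 (@mpow d Lam k)) :=
  [set x | forall i, D (@Defs.coord d Lam k x i)].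

Lemma DN0 D : DN D 0 = D.
Proof.
apply/seteqP; split => x /=; first by move=> /(_ ord0).
by move=> Dx i.
Qed.

Lemma DNS D k : DN D k.+1 = (DN D k `*` D).
Proof.
apply/seteqP; split => x /=.
- move=> H; split.
  + move=> j; have := H (lift ord_max j) => /=.
    by rewrite liftK.
  + by have := H ord_max => /=; rewrite unlift_none.
- move=> [H1 H2] i /=; case: unliftP => [j _|_] //.
Qed.

Lemma DNSE D k (y : projT2 (@mpow d Lam k)) (t : Lam) :
  DN D k.+1 (y, t) <-> DN D k y /\ D t.
Proof. by rewrite DNS. Qed.

Lemma measurable_DN D k : measurable D -> measurable (DN D k).
Proof.
move=> mD; elim: k => [|k IH]; first by rewrite DN0.
rewrite DNS; exact: measurableX.
Qed.

Lemma DN_le D1 D2 k : D1 `<=` D2 -> DN D1 k `<=` DN D2 k.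
Proof. by move=> sD x /= H i; apply: sD. Qed.

Lemma DN_perm D k (s : {perm 'I_k.+1}) (x y : Lpow Lam k) :
  (forall i, Defs.coord y i = Defs.coord x (s i)) -> (DN D k y <-> DN D k x).
Proof.
move=> H; split => /= Hx i.
- have := Hx (s^-1 i)%g; rewrite H permKV //.
- by rewrite H.
Qed.
End DNsec.
Section Msec.
Context {d : measure_display} {Lam : measurableType d} {R : realType}
  (mu : {sigma_finite_measure set Lam -> \bar R}).

Lemma mupow_DN D k (r : R) : measurable D -> mu D = r%:E ->
  mupow mu k (DN D k) = (r ^+ k.+1)%:E.
Proof.
move=> mD muD; elim: k => [|k IH]; first by rewrite DN0 /= muD expr1.
rewrite DNS /= product_measure1E //; last exact: measurable_DN.
by rewrite IH muD -EFinM [in RHS]exprSr.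
Qed.

Lemma cmupow_E k (A : set (Lpow Lam k)) : measurable A ->
  cmupow mu k A = mupow mu k A.
Proof. move=> mA; rewrite /cmupow /completed_measure_extension. rewrite measurable_mu_extE //. Qed.

Lemma cmeasurable k (A : set (Lpow Lam k)) : measurable A ->
  measurable (A : set (Ltype mu k)).
Proof. by move=> mA; exact: caratheodory_measurable_mu_ext. Qed.
End Msec.
Lemma le_integral_nm {dd} {T : measurableType dd} {R : realType}
  (m : {measure set T -> \bar R}) (f g : T -> \bar R) :
  (forall x, (0 <= f x)%E) -> (forall x, (f x <= g x)%E) ->
  (\int[m]_x f x <= \int[m]_x g x)%E.
Proof.
move=> f0 fg; have g0 x : (0 <= g x)%E by exact: le_trans (f0 x) (fg x).
rewrite !ge0_integralTE //; apply: le_ereal_sup => _ [h hf <-].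
by exists h => // x; exact: le_trans (hf x) (fg x).
Qed.

Section Cons.
Context {d : measure_display} {Lam : measurableType d} {R : realType}
  (mu : {sigma_finite_measure set Lam -> \bar R}) (k : nat)
  (P : Lpow Lam k.+1 -> R) (D : set Lam) (r M eps : R).

Definition PDM (x : Lpow Lam k.+1) : R := Num.min (P x) M * \1_(DN D k.+1) x.
Definition Zr : R := fine (\int[cmupow mu k.+1]_x (PDM x)%:E)%E.
Definition vr : R := r ^+ k.+2.
Definition cr : R := 1 - (1 - eps) * Zr.
Definition Pn (x : Lpow Lam k.+1) : R :=
  ((1 - eps) * Num.min (P x) M + cr / vr) * \1_(DN D k.+1) x.

Hypothesis HP : sym_prob_density mu P.
Hypothesis mD : measurable D.
Hypothesis muD : mu D = r%:E.
Hypothesis r0 : 0 < r.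
Hypothesis M0 : 0 <= M.
Hypothesis e0 : 0 < eps.
Hypothesis e1 : eps <= 1.

Let P0 : forall x, 0 <= P x. Proof. by case: HP. Qed.
Let mP : measurable_fun [set: Ltype mu k.+1] (P : Ltype mu k.+1 -> R).
Proof. by case: HP. Qed.
Let intP : (\int[cmupow mu k.+1]_x (P x)%:E = 1)%E.
Proof. by case: HP. Qed.

Let mDN : measurable (DN D k.+1 : set (Ltype mu k.+1)).
Proof. exact/cmeasurable/measurable_DN. Qed.

Let mDN' : measurable (DN D k.+1).
Proof. exact/measurable_DN. Qed.

Lemma cmupow_DN : cmupow mu k.+1 (DN D k.+1) = vr%:E.
Proof. by rewrite cmupow_E // (mupow_DN _ _ _ _ mD muD). Qed.

Lemma PDM_ge0 x : 0 <= PDM x.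
Proof. by rewrite /PDM; apply: mulr_ge0; [rewrite le_min P0 M0|rewrite indicE]. Qed.

Lemma PDM_leP x : PDM x <= P x.
Proof.
rewrite /PDM indicE; case: (_ \in _); rewrite ?mulr1 ?mulr0 ?P0 //.
by rewrite ge_min lexx.
Qed.

Lemma mPDM : measurable_fun [set: Ltype mu k.+1] (PDM : Ltype mu k.+1 -> R).
Proof.
apply: measurable_funM; first exact: measurable_minr.
exact: measurable_indic.
Qed.

Let ZE := (\int[cmupow mu k.+1]_x (PDM x)%:E)%E.

Let mPDME : measurable_fun [set: Ltype mu k.+1] (fun x : Ltype mu k.+1 => (PDM x)%:E).
Proof. exact/measurable_EFinP/mPDM. Qed.
Let mPE : measurable_fun [set: Ltype mu k.+1] (fun x : Ltype mu k.+1 => (P x)%:E).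
Proof. exact/measurable_EFinP/mP. Qed.

Lemma ZE_ge0 : (0 <= ZE)%E.
Proof. by apply: integral_ge0 => x _; rewrite lee_fin PDM_ge0. Qed.

Lemma ZE_le1 : (ZE <= 1)%E.
Proof.
rewrite -intP; apply: ge0_le_integral => //.
- by move=> x _; rewrite lee_fin PDM_ge0.
- by move=> x _; rewrite lee_fin PDM_leP.
Qed.

Lemma ZEE : ZE = Zr%:E.
Proof.
rewrite /Zr fineK // ge0_fin_numE ?ZE_ge0 //.
exact: le_lt_trans ZE_le1 (ltry _).
Qed.

Lemma Zr_ge0 : 0 <= Zr.
Proof. by rewrite -lee_fin -ZEE ZE_ge0. Qed.
Lemma Zr_le1 : Zr <= 1.
Proof. by rewrite -lee_fin -ZEE ZE_le1. Qed.

Lemma cr_ge : eps <= cr.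
Proof.
rewrite /cr; have h1 : 0 <= 1 - eps by rewrite subr_ge0.
have h2 : 0 <= 1 - Zr by rewrite subr_ge0 Zr_le1.
have := mulr_ge0 h1 h2; lra.
Qed.

Lemma cr_gt0 : 0 < cr.
Proof. exact: lt_le_trans e0 cr_ge. Qed.

Lemma vr_gt0 : 0 < vr.
Proof. by rewrite /vr exprn_gt0. Qed.

Lemma PnE x : Pn x = (1 - eps) * PDM x + (cr / vr) * \1_(DN D k.+1) x.
Proof. by rewrite /Pn /PDM mulrDl mulrA. Qed.

Lemma Pn_ge0 x : 0 <= Pn x.
Proof.
have hc : 0 <= cr / vr by rewrite divr_ge0 // ltW // ?cr_gt0 ?vr_gt0.
rewrite PnE addr_ge0 // mulr_ge0 // ?PDM_ge0 ?subr_ge0 ?indicE //.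
Qed.

Lemma mPn : measurable_fun [set: Ltype mu k.+1] (Pn : Ltype mu k.+1 -> R).
Proof.
rewrite /Pn.
apply: (@measurable_funM _ _ _ _ (fun x : Ltype mu k.+1 => (1 - eps) * Num.min (P x) M + cr / vr) (\1_(DN D k.+1))).
  apply: (@measurable_funD _ _ _ _ (fun x : Ltype mu k.+1 => (1 - eps) * Num.min (P x) M) (fun=> cr / vr)).
    apply: (@measurable_funM _ _ _ _ (fun=> 1 - eps) (fun x : Ltype mu k.+1 => Num.min (P x) M)).
      exact: measurable_cst.
    exact: (@measurable_minr _ _ _ _ (P : Ltype mu k.+1 -> R) (fun=> M) mP (measurable_cst _)).
  exact: measurable_cst.
exact: measurable_indic.
Qed.
Lemma int_Pn : (\int[cmupow mu k.+1]_x (Pn x)%:E = 1)%E.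
Proof.
under eq_integral => x _ do rewrite PnE EFinD (EFinM (1 - eps)) (EFinM (cr / vr)).
have hc : 0 <= cr / vr by rewrite divr_ge0 // ltW // ?cr_gt0 ?vr_gt0.
rewrite ge0_integralD; [|exact: measurableT|(by move=> x _; rewrite mule_ge0 // lee_fin ?subr_ge0 ?PDM_ge0)|(exact: measurable_funeM mPDME)|(by move=> x _; rewrite mule_ge0 // lee_fin ?indicE)|(apply: measurable_funeM; exact/measurable_EFinP/measurable_indic)].
have h1 : 0 <= 1 - eps by rewrite subr_ge0.
have g1 : forall x : Ltype mu k.+1, [set: Ltype mu k.+1] x -> (0 <= (PDM x)%:E)%E.
  by move=> x Hx; rewrite lee_fin PDM_ge0.
have g2 : forall x : Ltype mu k.+1, [set: Ltype mu k.+1] x -> (0 <= (\1_(DN D k.+1) x : R)%:E)%E.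
  by move=> x Hx; rewrite lee_fin indicE.
have m2 : measurable_fun [set: Ltype mu k.+1] (fun x : Ltype mu k.+1 => (\1_(DN D k.+1) x : R)%:E).
  exact/measurable_EFinP/measurable_indic.
rewrite (ge0_integralZl_EFin _ measurableT g1 mPDME h1).
rewrite (ge0_integralZl_EFin _ measurableT g2 m2 hc).
rewrite integral_indic // setIT.
rewrite (_ : _ (DN D k.+1) = vr%:E); last exact: cmupow_DN.
rewrite -/ZE ZEE -!EFinM -EFinD.
congr (_%:E); rewrite /cr; have := vr_gt0; rewrite lt0r => /andP[vn0 _].
by field.
Qed.

Lemma Pn_sym (s : {perm 'I_k.+2}) (x y : Lpow Lam k.+1) :
  (forall i, Defs.coord y i = Defs.coord x (s i)) -> Pn y = Pn x.
Proof.
move=> H; have [_ _ Hs _] := HP.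
rewrite /Pn (Hs s x y H); congr (_ * _); rewrite !indicE.
have [h1 h2] := DN_perm D _ s _ _ H.
have [hy|hy] := boolP (y \in DN D k.+1); have [hx|hx] := boolP (x \in DN D k.+1) => //.
  by rewrite (mem_set (h1 (set_mem hy))) in hx.
by rewrite (mem_set (h2 (set_mem hx))) in hy.
Qed.

Lemma Pn_out (y : Lpow Lam k) t : ~ DN D k y -> Pn (y, t) = 0.
Proof.
move=> Hy; rewrite /Pn indicE memNset ?mulr0 //.
by move/DNSE => [].
Qed.

Lemma Pn_in (y : Lpow Lam k) t : DN D k y -> D t ->
  Pn (y, t) = (1 - eps) * Num.min (P (y, t)) M + cr / vr.
Proof.
by move=> Hy Dt; rewrite /Pn indicE mem_set ?mulr1 //; apply/DNSE.
Qed.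

Lemma Pn_lower : lower_bound_cond mu Pn.
Proof.
have hc : 0 < cr / vr by rewrite divr_gt0 ?cr_gt0 ?vr_gt0.
have h1 : 0 <= 1 - eps by rewrite subr_ge0.
set K := (1 - eps) * M + cr / vr.
have K0 : 0 < K by rewrite /K ltr_wpDl // mulr_ge0.
exists D; split => //; first by rewrite muD lte_fin r0.
move=> xN DxN.
exists ((cr / vr) / (K * r)); split; first by rewrite divr_gt0 // mulr_gt0.
apply: aeW => y.
have [Hy|Hy] := pselect (DN D k y); last first.
  rewrite /marginal (eq_integral (fun=> 0%E)); last first.
    by move=> t _; rewrite Pn_out.
  by rewrite integral0 mule0 lee_fin Pn_ge0.
have marg : (marginal mu Pn y <= (K * r)%:E)%E.
  rewrite /marginal.
  apply: le_trans (le_integral_nm _ _ (fun t => (K%:E * (\1_D t : R)%:E)%E) _ _) _.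
  - by move=> t; rewrite lee_fin Pn_ge0.
  - move=> t; rewrite -EFinM lee_fin indicE.
    have [Dt|Dt] := pselect (D t).
      rewrite mem_set // mulr1 Pn_in // /K lerD2r.
      by rewrite ler_wpM2l // ge_min lexx orbT.
    have nd : ~ DN D k.+1 (y, t) by move=> /DNSE [] _ /Dt.
    by rewrite memNset // mulr0 /Pn indicE memNset // mulr0.
  - have g2 : forall t : Lam, [set: Lam] t -> (0 <= (\1_D t : R)%:E)%E.
      by move=> t Ht; rewrite lee_fin indicE.
    have m2 : measurable_fun [set: Lam] (fun t : Lam => (\1_D t : R)%:E).
      exact/measurable_EFinP/measurable_indic.
    rewrite (ge0_integralZl_EFin _ measurableT g2 m2 (ltW K0)).
    by rewrite integral_indic // setIT (_ : _ D = r%:E) // -EFinM.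
rewrite Pn_in //.
apply: le_trans (lee_wpmul2l _ marg) _; first by rewrite lee_fin ltW // divr_gt0 // mulr_gt0.
rewrite -EFinM lee_fin.
have -> : cr / vr / (K * r) * (K * r) = cr / vr.
  by rewrite divfK // mulf_neq0 // gt_eqF.
by rewrite lerDr mulr_ge0 // le_min P0 M0.
Qed.

Let aF (x : Lpow Lam k.+1) : R := (1 - eps) * PDM x.
Let bF (x : Lpow Lam k.+1) : R := cr / vr * \1_(DN D k.+1) x.

Let h1 : 0 <= 1 - eps. Proof. by rewrite subr_ge0. Qed.
Let hc : 0 <= cr / vr. Proof. by rewrite divr_ge0 // ltW // ?cr_gt0 ?vr_gt0. Qed.

Let aF_leP x : aF x <= P x.
Proof.
apply: le_trans (PDM_leP x); rewrite /aF ler_piMl // ?PDM_ge0 //.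
by rewrite gerBl ltW.
Qed.

Let maF : measurable_fun [set: Ltype mu k.+1] (aF : Ltype mu k.+1 -> R).
Proof. exact: (measurable_funM (measurable_cst (1 - eps)) mPDM). Qed.
Let mbF : measurable_fun [set: Ltype mu k.+1] (bF : Ltype mu k.+1 -> R).
Proof. exact: (measurable_funM (measurable_cst (cr / vr)) (measurable_indic mDN)). Qed.

Lemma int_aF : (\int[cmupow mu k.+1]_x (aF x)%:E = ((1 - eps) * Zr)%:E)%E.
Proof.
have g1 : forall x : Ltype mu k.+1, [set: Ltype mu k.+1] x -> (0 <= (PDM x)%:E)%E.
  by move=> x Hx; rewrite lee_fin PDM_ge0.
under eq_integral => x _ do rewrite /aF EFinM.
by rewrite (ge0_integralZl_EFin _ measurableT g1 mPDME h1) -/ZE ZEE EFinM.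
Qed.

Lemma int_PaF : (\int[cmupow mu k.+1]_x (P x - aF x)%:E = cr%:E)%E.
Proof.
have e : (\int[cmupow mu k.+1]_x ((P x - aF x)%:E + (aF x)%:E) = 1)%E.
  rewrite -intP; apply: eq_integral => x _; by rewrite -EFinD subrK.
rewrite ge0_integralD in e; [|exact: measurableT|(by move=> x _; rewrite lee_fin subr_ge0)|(exact/measurable_EFinP/(measurable_funB mP maF))|(by move=> x _; rewrite lee_fin /aF mulr_ge0 // PDM_ge0)|(exact/measurable_EFinP/maF)].
move: e; rewrite int_aF => /(congr1 (fun z => z - ((1 - eps) * Zr)%:E)%E).
by rewrite addeK // -EFinB /cr => ->.
Qed.

Lemma int_bF : (\int[cmupow mu k.+1]_x (bF x)%:E = cr%:E)%E.
Proof.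
have g2 : forall x : Ltype mu k.+1, [set: Ltype mu k.+1] x -> (0 <= (\1_(DN D k.+1) x : R)%:E)%E.
  by move=> x Hx; rewrite lee_fin indicE.
have m2 : measurable_fun [set: Ltype mu k.+1] (fun x : Ltype mu k.+1 => (\1_(DN D k.+1) x : R)%:E).
  exact/measurable_EFinP/measurable_indic.
under eq_integral => x _ do rewrite /bF EFinM.
rewrite (ge0_integralZl_EFin _ measurableT g2 m2 hc) integral_indic // setIT.
rewrite (_ : _ (DN D k.+1) = vr%:E); last exact: cmupow_DN.
rewrite -EFinM divfK //; have := vr_gt0; rewrite lt0r => /andP[] //.
Qed.

Lemma L1_bound :
  (Lnorm (cmupow mu k.+1) 1%E (fun x : Ltype mu k.+1 => (Pn x - P x)%:E) <= (2 * cr)%:E)%E.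
Proof.
rewrite Lnorm1.
have f10 : forall x : Ltype mu k.+1, [set: Ltype mu k.+1] x -> (0 <= `|(Pn x - P x)%:E|)%E.
  by move=> x Hx; exact: abse_ge0.
have mf1 : measurable_fun [set: Ltype mu k.+1] (fun x : Ltype mu k.+1 => `|(Pn x - P x)%:E|%E).
  have mE : measurable_fun [set: Ltype mu k.+1] (fun x : Ltype mu k.+1 => (Pn x - P x)%:E).
    exact/measurable_EFinP/(measurable_funB mPn mP).
  exact: (measurableT_comp (@abse_measurable R setT) mE).
have mf2 : measurable_fun [set: Ltype mu k.+1]
    (fun x : Ltype mu k.+1 => ((P x - aF x)%:E + (bF x)%:E)%E).
  by apply: emeasurable_funD; [exact/measurable_EFinP/(measurable_funB mP maF)|exact/measurable_EFinP/mbF].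
have H : forall x : Ltype mu k.+1, [set: Ltype mu k.+1] x ->
    (`|(Pn x - P x)%:E| <= (P x - aF x)%:E + (bF x)%:E)%E.
  move=> x _; rewrite abse_EFin -EFinD lee_fin.
  have -> : Pn x - P x = (aF x - P x) + bF x by rewrite PnE /aF /bF; ring.
  apply: le_trans (ler_normD _ _) _.
  rewrite ler0_norm ?subr_le0 // opprB lerD2l ger0_norm // /bF mulr_ge0 // ?indicE //.
apply: le_trans (ge0_le_integral _ measurableT f10 mf1 mf2 H) _.
rewrite ge0_integralD; [|exact: measurableT|(by move=> x _; rewrite lee_fin subr_ge0)|(exact/measurable_EFinP/(measurable_funB mP maF))|(by move=> x _; rewrite lee_fin /bF mulr_ge0 // indicE)|(exact/measurable_EFinP/mbF)].
by rewrite int_PaF int_bF -EFinD mulr2n mulrDl mul1r.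
Qed.

Lemma Linf_bound (B : R) : D = setT -> 0 <= B -> B <= M ->
  (\forall x \ae cmupow mu k.+1, P x <= B) ->
  (Lnorm (cmupow mu k.+1) +oo%E (fun x : Ltype mu k.+1 => (Pn x - P x)%:E)
     <= (eps * B + cr / vr)%:E)%E.
Proof.
move=> HD B0 BM HB.
have hB : 0 <= eps * B + cr / vr by rewrite addr_ge0 // mulr_ge0 // ltW.
rewrite unlock /=; case: ifPn => _; last by rewrite lee_fin.
have FF := @ae_filter_ringOfSetsType _ (Ltype mu k.+1) R (cmupow mu k.+1).
apply/ess_supP; apply: (@filterS _ _ FF _ _ _ HB) => x PxB /=.
have inD : DN D k.+1 x by rewrite HD.
have -> : Pn x - P x = cr / vr - eps * P x.
  rewrite /Pn indicE mem_set // mulr1.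
  have -> : Num.min (P x) M = P x by apply/min_idPl; exact: le_trans PxB BM.
  ring.
rewrite lee_fin.
apply: le_trans (ler_normB _ _) _.
have hp : 0 <= eps * P x by rewrite mulr_ge0 ?P0 // ltW.
rewrite (ger0_norm hc) (ger0_norm hp).
have := ler_wpM2l (ltW e0) PxB; lra.
Qed.
End Cons.

Lemma harm_le1 {R : realType} m : (harmonic m : R) <= 1.
Proof. by rewrite /harmonic /= invf_le1 ?ltr0n // ler1n. Qed.

Section Lim.
Context {d : measure_display} {Lam : measurableType d} {R : realType}
  (mu : {sigma_finite_measure set Lam -> \bar R}) (k : nat)
  (P : Lpow Lam k.+1 -> R) (HP : sym_prob_density mu P)
  (Ds : nat -> set Lam) (rs Ms : nat -> R)
  (mDs : forall m, measurable (Ds m))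
  (muDs : forall m, mu (Ds m) = (rs m)%:E)
  (rs0 : forall m, 0 < rs m)
  (Ds_nd : forall m m', (m <= m')%N -> Ds m `<=` Ds m')
  (Ds_cov : forall x, exists m, Ds m x)
  (Ms0 : forall m, 0 <= Ms m)
  (Ms_nd : forall m m', (m <= m')%N -> Ms m <= Ms m')
  (Ms_unb : forall y, exists m, y <= Ms m).

Let eps_gt0 m : 0 < (harmonic m : R). Proof. exact: harmonic_gt0. Qed.
Let eps_le1 m : (harmonic m : R) <= 1. Proof. exact: harm_le1. Qed.

Definition Pseq m := Pn mu k P (Ds m) (rs m) (Ms m) (harmonic m).

Ltac solve_h := first [exact: HP | exact: mDs | exact: muDs | exact: rs0
  | exact: Ms0 | exact: eps_gt0 | exact: eps_le1].

Lemma Pseq_ok m : sym_prob_density mu (Pseq m) /\ lower_bound_cond mu (Pseq m).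
Proof.
split; last by apply: (Pn_lower mu k P (Ds m) (rs m) (Ms m) (harmonic m)); solve_h.
split.
- by move=> x; apply: (Pn_ge0 mu k P (Ds m) (rs m) (Ms m) (harmonic m)); solve_h.
- by apply: (mPn mu k P (Ds m) (rs m) (Ms m) (harmonic m)); solve_h.
- by move=> s x y H; apply: (Pn_sym mu k P (Ds m) (rs m) (Ms m) (harmonic m)); first [solve_h | exact: H].
- by apply: (int_Pn mu k P (Ds m) (rs m) (Ms m) (harmonic m)); solve_h.
Qed.


Let PDMm m := PDM k P (Ds m) (Ms m).

Lemma PDMm_ev (x : Lpow Lam k.+1) : exists N, forall m, (N <= m)%N -> PDMm m x = P x.
Proof.
have /choice [f hf] : forall i : 'I_k.+2, exists m, Ds m (Defs.coord x i).
  by move=> i; exact: Ds_cov.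
have [m2 hm2] := Ms_unb (P x).
exists (maxn (\max_i f i) m2) => m; rewrite geq_max => /andP[h1 h2].
have inD : DN (Ds m) k.+1 x.
  move=> i; apply: (Ds_nd (f i) m); last exact: hf.
  exact: leq_trans (leq_bigmax _) h1.
rewrite /PDMm /PDM indicE mem_set // mulr1.
by apply/min_idPl; exact: le_trans hm2 (Ms_nd _ _ h2).
Qed.

Lemma Z_cvg : Zr mu k P (Ds m) (Ms m) @[m --> \oo] --> (1 : R).
Proof.
have P0 : forall x, 0 <= P x by case: HP.
have mP : measurable_fun [set: Ltype mu k.+1] (P : Ltype mu k.+1 -> R) by case: HP.
have intP : (\int[cmupow mu k.+1]_x (P x)%:E = 1)%E by case: HP.
have PDM0 m x : 0 <= PDMm m x.
  rewrite /PDMm /PDM; apply: mulr_ge0; [by rewrite le_min P0 Ms0|by rewrite indicE].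
have mg : forall m, measurable_fun [set: Ltype mu k.+1]
    (fun x : Ltype mu k.+1 => (PDMm m x)%:E).
  move=> m; apply/measurable_EFinP.
  apply: (@measurable_funM _ _ _ _ (fun x : Ltype mu k.+1 => Num.min (P x) (Ms m))
     (\1_(DN (Ds m) k.+1))).
    exact: (@measurable_minr _ _ _ _ (P : Ltype mu k.+1 -> R) (fun=> Ms m) mP (measurable_cst _)).
  exact/measurable_indic/cmeasurable/measurable_DN.
have g0 : forall m (x : Ltype mu k.+1), [set: Ltype mu k.+1] x -> (0 <= (PDMm m x)%:E)%E.
  by move=> m x _; rewrite lee_fin PDM0.
have nd : forall x : Ltype mu k.+1, [set: Ltype mu k.+1] x ->
    {homo (fun m => (PDMm m x)%:E) : n m / (n <= m)%N >-> (n <= m)%E}.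
  move=> x _ n m nm; rewrite lee_fin /PDMm /PDM !indicE.
  have [xin|xn] := boolP (x \in DN (Ds n) k.+1).
    have xim : x \in DN (Ds m) k.+1.
      by apply/mem_set; apply: (DN_le _ _ _ (Ds_nd _ _ nm)); exact/set_mem.
    rewrite xim !mulr1 le_min !ge_min lexx /=.
    by rewrite (Ms_nd _ _ nm) orbT.
  by rewrite mulr0 mulr_ge0 // ?le_min ?P0 ?Ms0.
have := @cvg_monotone_convergence _ _ _ (cmupow mu k.+1) _ measurableT _ mg g0 nd.
rewrite (@eq_integral _ _ _ (cmupow mu k.+1) setT (fun x => (P x)%:E)); last first.
  move=> x _; apply: cvg_lim => //; apply: cvg_near_cst.
  have [N hN] := PDMm_ev x; exists N => // m /= hm; by rewrite hN.
by rewrite intP => /fine_cvg.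
Qed.

Lemma cr_cvg : cr mu k P (Ds m) (Ms m) (harmonic m) @[m --> \oo] --> (0 : R).
Proof.
have H := cvgB (cvg_cst (1 : R)) (cvgM (cvgB (cvg_cst (1 : R)) (@cvg_harmonic R)) Z_cvg).
rewrite subr0 mul1r subrr in H; exact: H.
Qed.

Lemma L1_cvg :
  Lnorm (cmupow mu k.+1) 1%E (fun x : Ltype mu k.+1 => (Pseq m x - P x)%:E)
    @[m --> \oo] --> 0%E.
Proof.
apply: (@squeeze_cvge _ _ _ _ (cst 0%E) _ (fun m => (2 * cr mu k P (Ds m) (Ms m) (harmonic m))%:E)).
- apply: nearW => m; rewrite Lnorm_ge0 /=.
  by apply: (L1_bound mu k P (Ds m) (rs m) (Ms m) (harmonic m)); solve_h.
- exact: cvg_cst.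
- apply: cvg_EFin; first exact: nearW.
  have H := cvgM (cvg_cst (2 : R)) cr_cvg.
  rewrite mulr0 in H; exact: H.
Qed.

Lemma Linf_cvg (r B : R) : (forall m, Ds m = setT) -> (forall m, rs m = r) ->
  0 <= B -> (forall m, B <= Ms m) ->
  (\forall x \ae cmupow mu k.+1, P x <= B) ->
  Lnorm (cmupow mu k.+1) +oo%E (fun x : Ltype mu k.+1 => (Pseq m x - P x)%:E)
    @[m --> \oo] --> 0%E.
Proof.
move=> HD Hr B0 BM HB.
apply: (@squeeze_cvge _ _ _ _ (cst 0%E) _
  (fun m => (harmonic m * B + cr mu k P (Ds m) (Ms m) (harmonic m) / vr k r)%:E)).
- apply: nearW => m; rewrite Lnorm_ge0 /= -(Hr m).
  apply: (Linf_bound mu k P (Ds m) (rs m) (Ms m) (harmonic m)); try solve_h.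
  + exact: HD.
  + exact: B0.
  + exact: BM.
  + exact: HB.
- exact: cvg_cst.
- apply: cvg_EFin; first exact: nearW.
  have H := cvgD (cvgM (@cvg_harmonic R) (cvg_cst B)) (cvgM cr_cvg (cvg_cst (vr k r)^-1)).
  rewrite !mul0r addr0 in H; exact: H.
Qed.

End Lim.

Lemma unb_nat {R : realType} (y : R) : exists m : nat, y <= m%:R.
Proof. by exists (Num.trunc y).+1; exact/ltW/truncnS_gt. Qed.

Theorem theorem4 (d : measure_display) (Lam : measurableType d) (R : realType)
    (mu : {sigma_finite_measure set Lam -> \bar R}) (n : nat)
    (P : Lpow Lam n.+1 -> R) :
  measure_is_complete mu ->
  mu [set: Lam] != 0%E ->
  sym_prob_density mu P ->
  (exists Pn : nat -> Lpow Lam n.+1 -> R,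
      (forall m, sym_prob_density mu (Pn m) /\ lower_bound_cond mu (Pn m)) /\
      Lnorm (cmupow mu n.+1) 1%E (fun x : Ltype mu n.+1 => (Pn m x - P x)%:E)
        @[m --> \oo] --> 0%E) /\
  ((mu [set: Lam] < +oo)%E ->
   (Lnorm (cmupow mu n.+1) +oo%E (fun x : Ltype mu n.+1 => (P x)%:E) < +oo)%E ->
   exists Pn : nat -> Lpow Lam n.+1 -> R,
      [/\ forall m, sym_prob_density mu (Pn m) /\ lower_bound_cond mu (Pn m),
          Lnorm (cmupow mu n.+1) 1%E (fun x : Ltype mu n.+1 => (Pn m x - P x)%:E)
            @[m --> \oo] --> 0%E &
          Lnorm (cmupow mu n.+1) +oo%E (fun x : Ltype mu n.+1 => (Pn m x - P x)%:E)
            @[m --> \oo] --> 0%E]).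
Proof.
move=> _ mu0 HP; split.
- have /sigma_finiteP [F [FT Fnd Ffin]] := sigma_finiteT mu.
  have mF i : measurable (F i) by case: (Ffin i).
  have [m0 Hm0] : exists m0, (0 < mu (F m0))%E.
    apply: contrapT => /forallNP H.
    have H0 i : mu (F i) = 0%E.
      by move/negP: (H i); rewrite lt0e measure_ge0 andbT negbK => /eqP.
    move/eqP: mu0; apply; apply/eqP; rewrite eq_le measure_ge0 andbT.
    have := @measure_sigma_subadditive _ _ _ mu [set: Lam] F mF measurableT.
    move=> Hs; apply: le_trans (Hs _) _.
      by rewrite -FT.
    by rewrite eseries0 // => i _ _; exact: H0.
  pose Ds m := F (m + m0)%N.
  have Fle a b : (a <= b)%N -> F a `<=` F b by move=> ab; rewrite -subsetEset; exact: Fnd.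
  have mDs m : measurable (Ds m) by exact: mF.
  have Dpos m : (0 < mu (Ds m))%E.
    apply: lt_le_trans Hm0 _; apply: le_measure; rewrite ?inE //.
    by apply: Fle; rewrite leq_addl.
  have Dfin m : (mu (Ds m) < +oo)%E by case: (Ffin (m + m0)%N).
  pose rs m := fine (mu (Ds m)).
  have muDs m : mu (Ds m) = (rs m)%:E.
    by rewrite /rs fineK // ge0_fin_numE // ?Dfin // ltW.
  have rs0 m : 0 < rs m by apply: fine_gt0; rewrite Dpos Dfin.
  have Ds_nd m m' : (m <= m')%N -> Ds m `<=` Ds m'.
    by move=> mm; apply: Fle; rewrite leq_add2r.
  have Ds_cov x : exists m, Ds m x.
    have : [set: Lam] x by [].
    rewrite FT => -[i _ Fix]; exists i; apply: (Fle i) => //.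
    exact: leq_addr.
  pose Ms m : R := m%:R.
  have Ms0 m : 0 <= Ms m by rewrite /Ms ler0n.
  have Ms_nd m m' : (m <= m')%N -> Ms m <= Ms m' by move=> mm; rewrite /Ms ler_nat.
  exists (Pseq mu n P Ds rs Ms); split.
    move=> m; exact: (Pseq_ok mu n P HP Ds rs Ms mDs muDs rs0 Ms0).
  exact: (L1_cvg mu n P HP Ds rs Ms mDs muDs rs0 Ds_nd Ds_cov Ms0 Ms_nd unb_nat).
- move=> finT Pbdd.
  have mu0' : (0 < mu [set: Lam])%E by rewrite lt0e mu0 measure_ge0.
  pose r := fine (mu [set: Lam]).
  have muT : mu [set: Lam] = r%:E.
    by rewrite /r fineK // ge0_fin_numE // measure_ge0.
  have r0 : 0 < r by apply: fine_gt0; rewrite mu0' finT.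
  have DNT : DN [set: Lam] n.+1 = [set: Lpow Lam n.+1].
    by apply/seteqP; split => x //= _ i.
  have cT : (0 < cmupow mu n.+1 [set: Ltype mu n.+1])%E.
    have : cmupow mu n.+1 (DN [set: Lam] n.+1) = (r ^+ n.+2)%:E.
      by rewrite cmupow_E ?(mupow_DN mu [set: Lam] n.+1 r) //; exact: measurable_DN.
    by rewrite DNT => ->; rewrite lte_fin exprn_gt0.
  have [B [B0 HB]] : exists B : R, 0 <= B /\ (\forall x \ae cmupow mu n.+1, P x <= B).
    move: Pbdd; rewrite unlock /= cT.
    set E := ess_sup _ _ => EF.
    have FF := @ae_filter_ringOfSetsType _ (Ltype mu n.+1) R (cmupow mu n.+1).
    have HE : \forall x \ae cmupow mu n.+1, (`|(P x)%:E| <= E)%E.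
      by apply/ess_supP.
    move: EF HE; case: E => [e| |] EF HE.
    + exists `|e|; split => //; apply: (@filterS _ _ FF _ _ _ HE) => x /=.
      rewrite lee_fin => h; apply: le_trans (ler_norm _) (le_trans h (ler_norm _)).
    + by [].
    + exists 0; split => //; apply: (@filterS _ _ FF _ _ _ HE) => x /=.
      by rewrite leeNy_eq.
  pose Ds (m : nat) := [set: Lam].
  pose rs (m : nat) := r.
  pose Ms (m : nat) : R := B + m%:R.
  have mDs m : measurable (Ds m) by exact: measurableT.
  have muDs m : mu (Ds m) = (rs m)%:E by [].
  have rs0 m : 0 < rs m by [].
  have Ds_nd m m' : (m <= m')%N -> Ds m `<=` Ds m' by [].
  have Ds_cov x : exists m, Ds m x by exists 0%N.
  have Ms0 m : 0 <= Ms m by rewrite addr_ge0.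
  have Ms_nd m m' : (m <= m')%N -> Ms m <= Ms m' by move=> mm; rewrite lerD2l ler_nat.
  have Ms_unb y : exists m, y <= Ms m.
    have [m hm] := unb_nat y; exists m; rewrite /Ms.
    by apply: le_trans hm _; rewrite lerDr.
  exists (Pseq mu n P Ds rs Ms); split.
  + move=> m; exact: (Pseq_ok mu n P HP Ds rs Ms mDs muDs rs0 Ms0).
  + exact: (L1_cvg mu n P HP Ds rs Ms mDs muDs rs0 Ds_nd Ds_cov Ms0 Ms_nd Ms_unb).
  + apply: (Linf_cvg mu n P HP Ds rs Ms mDs rs0 Ds_nd Ds_cov Ms0 Ms_nd Ms_unb r B) => //.
    by move=> m; rewrite /Ms lerDl.
Qed.
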